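(* Let $\mathcal{Q}=\langle\mathcal{A},\mathcal{R}^-,\mathcal{R}^+,\tau\rangle$ be a QBAF, $\sigma$ a gradual semantics, $\alpha\in\mathcal{A}$ and $r_i,r_j\in\mathcal{R}$ with $r_i\neq r_j$. Suppose there exists $\mathcal{S}'\subseteq\mathcal{R}\setminus\{r_i,r_j\}$ with $\sigma_{\mathcal{S}'\cup\{r_i\}}(\alpha)>\sigma_{\mathcal{S}'\cup\{r_j\}}(\alpha)$, and that for all $\mathcal{S}''\subseteq\mathcal{R}\setminus\{r_i,r_j\}$ with $\mathcal{S}''\neq\mathcal{S}'$ we have $\sigma_{\mathcal{S}''\cup\{r_i\}}(\alpha)\ge\sigma_{\mathcal{S}''\cup\{r_j\}}(\alpha)$. Then $\phi^\alpha_\sigma(r_i)>\phi^\alpha_\sigma(r_j)$.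
   Context: A QBAF is a quadruple $\mathcal{Q}=\langle\mathcal{A},\mathcal{R}^-,\mathcal{R}^+,\tau\rangle$ with $\mathcal{A}$ a finite set of arguments, $\mathcal{R}^-,\mathcal{R}^+\subseteq\mathcal{A}\times\mathcal{A}$ disjoint attack and support relations, and $\tau:\mathcal{A}\to[0,1]$ base scores; $\mathcal{R}=\mathcal{R}^-\cup\mathcal{R}^+$. A gradual semantics $\sigma$ assigns strengths in $[0,1]$ to arguments of QBAFs and is assumed well-defined on all QBAFs considered. For $\mathcal{S}\subseteq\mathcal{R}$, $\sigma_{\mathcal{S}}(\alpha)$ denotes the strength of $\alpha$ in $\langle\mathcal{A},\mathcal{R}^-\cap\mathcal{S},\mathcal{R}^+\cap\mathcal{S},\tau\rangle$. The RAE from $r$ to $\alpha$ under $\sigma$ is $$\phi^\alpha_\sigma(r)=\sum_{\mathcal{S}\subseteq\mathcal{R}\setminus\{r\}}\frac{(|\mathcal{R}|-|\mathcal{S}|-1)!\,|\mathcal{S}|!}{|\mathcal{R}|!}\big[\sigma_{\mathcal{S}\cup\{r\}}(\alpha)-\sigma_{\mathcal{S}}(\alpha)\big].$$ *)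

(* Defs.v *)
From mathcomp Require Import all_boot all_order all_algebra.
Set Implicit Arguments. Unset Strict Implicit. Unset Printing Implicit Defensive.
Import Order.TTheory GRing.Theory Num.Theory.
Local Open Scope ring_scope.

Record QBAF (A : finType) (R : realFieldType) := MkQBAF {
  att : {set A * A};
  sup : {set A * A};
  tau : A -> R }.

Definition qbaf_wf (A : finType) (R : realFieldType) (Q : QBAF A R) : Prop :=
  [disjoint att Q & sup Q] /\ (forall a, 0 <= tau Q a <= 1).

Definition rels (A : finType) (R : realFieldType) (Q : QBAF A R) : {set A * A} :=
  att Q :|: sup Q.

Definition restrict (A : finType) (R : realFieldType) (Q : QBAF A R)
    (S : {set A * A}) : QBAF A R :=
  MkQBAF (att Q :&: S) (sup Q :&: S) (tau Q).

Definition semantics (A : finType) (R : realFieldType) := QBAF A R -> A -> R.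

Definition gradual (A : finType) (R : realFieldType) (sigma : semantics A R) : Prop :=
  forall Q, qbaf_wf Q -> forall a, 0 <= sigma Q a <= 1.

Definition strengthS (A : finType) (R : realFieldType) (sigma : semantics A R)
    (Q : QBAF A R) (S : {set A * A}) (alpha : A) : R :=
  sigma (restrict Q S) alpha.

Definition RAE (A : finType) (R : realFieldType) (sigma : semantics A R)
    (Q : QBAF A R) (alpha : A) (r : A * A) : R :=
  \sum_(S in powerset (rels Q :\ r))
     (((#|rels Q| - #|S| - 1)`! * #|S|`!)%:R / (#|rels Q|`!)%:R) *
     (strengthS sigma Q (r |: S) alpha - strengthS sigma Q S alpha).

(* Main.v *)
Require Import Defs.
From mathcomp Require Import all_boot all_order all_algebra ring.
Import Order.TTheory GRing.Theory Num.Theory.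
Local Open Scope ring_scope.

Lemma sum_powersetD1 (T : finType) (R : realFieldType) (D : {set T}) (x : T)
  (F : {set T} -> R) : x \in D ->
  \sum_(S in powerset D) F S =
  \sum_(S in powerset (D :\ x)) (F S + F (x |: S)).
Proof.
move=> xD; rewrite big_split /=.
rewrite [LHS](bigID (fun S : {set T} => x \in S)) /= addrC.
congr (_ + _).
  apply: eq_bigl => S; by rewrite !powersetE subsetD1.
rewrite (reindex_onto (fun S => x |: S) (fun S => S :\ x)) /=; last first.
  by move=> S /andP[_ xS]; rewrite setD1K.
apply: eq_bigl => S; rewrite !powersetE subsetD1 setU11 andbT.
rewrite subUset sub1set xD /=.
case xS: (x \in S).
  rewrite andbF; apply/negbTE/nandP; right; apply/eqP => E; move: xS; rewrite -E.
  by rewrite !inE eqxx.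
by rewrite setU1K ?eqxx ?andbT // xS.
Qed.

Theorem proposition5 (A : finType) (R : realFieldType) (Q : QBAF A R)
    (sigma : semantics A R) (alpha : A) (ri rj : A * A) :
  qbaf_wf Q -> gradual sigma ->
  ri \in rels Q -> rj \in rels Q -> ri != rj ->
  (exists S' : {set A * A},
      S' \subset rels Q :\: [set ri; rj] /\
      strengthS sigma Q (ri |: S') alpha > strengthS sigma Q (rj |: S') alpha /\
      (forall S'' : {set A * A}, S'' \subset rels Q :\: [set ri; rj] -> S'' != S' ->
         strengthS sigma Q (ri |: S'') alpha >= strengthS sigma Q (rj |: S'') alpha)) ->
  RAE sigma Q alpha ri > RAE sigma Q alpha rj.
Proof.
move=> _ _ riR rjR nij [S' [S'U [ltS' geS]]].
set n := #|rels Q|.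
set w := fun k : nat => (((n - k - 1)`! * k`!)%:R / (n`!)%:R : R).
have wpos k : 0 < w k.
  by apply: divr_gt0; rewrite ltr0n ?muln_gt0 !fact_gt0.
have Ueq1 : (rels Q :\ ri) :\ rj = rels Q :\: [set ri; rj] by rewrite setDDl.
have Ueq2 : (rels Q :\ rj) :\ ri = rels Q :\: [set ri; rj] by rewrite setDDl setUC.
have rjD : rj \in rels Q :\ ri by rewrite in_setD1 rjR andbT eq_sym.
have riD : ri \in rels Q :\ rj by rewrite in_setD1 riR andbT.
have key : RAE sigma Q alpha ri - RAE sigma Q alpha rj =
  \sum_(T in powerset (rels Q :\: [set ri; rj]))
     (w #|T| + w #|T|.+1) *
     (strengthS sigma Q (ri |: T) alpha - strengthS sigma Q (rj |: T) alpha).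
  rewrite /RAE (sum_powersetD1 _ _ _ _ _ rjD) (sum_powersetD1 _ _ _ _ _ riD) Ueq1 Ueq2 -sumrB.
  apply: eq_bigr => T; rewrite powersetE => TU.
  have riT : ri \notin T.
    by apply/negP => /(subsetP TU); rewrite !inE eqxx.
  have rjT : rj \notin T.
    by apply/negP => /(subsetP TU); rewrite !inE eqxx orbT.
  rewrite !cardsU1 riT rjT setUCA -/n -/(w #|T|) -/(w (true + #|T|)%N).
  rewrite add1n.
  ring.
rewrite -subr_gt0 key (bigD1 S') ?powersetE //=.
apply: (lt_le_trans (y := (w #|S'| + w #|S'|.+1) *
     (strengthS sigma Q (ri |: S') alpha - strengthS sigma Q (rj |: S') alpha))).
  by apply: mulr_gt0; [apply: addr_gt0 | rewrite subr_gt0].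
rewrite lerDl; apply: sumr_ge0 => T /andP[]; rewrite powersetE => TU TS'.
apply: mulr_ge0; first by apply: addr_ge0; apply: ltW.
by rewrite subr_ge0; apply: geS.
Qed.
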